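(* Let $\mathcal A\subset\mathbb R^n$ be compact with diameter $D_{\mathcal A}<\infty$, let $\mathcal X=\mathrm{conv}(\mathcal A)$ or $\mathcal X=\mathrm{lin}(\mathcal A)$, and let $f$ be differentiable with $L$-Lipschitz gradient. Let $\{x_t\}_{t\ge0}$ be generated by the AC-FW algorithm described in the context, and assume Conditions (D) and (S) hold. Fix $\eta>1$. Then for every $t\ge0$: (i) $f(x_{t+1})\le f(\bar x_{t+1})\le f(x_t)-\gamma_t\nabla f(x_t)^\top d_t+\frac{L_{t+1}}{2}\gamma_t^2\|d_t\|_2^2$; (ii) if $t\in\mathcal I_\eta$, then $f(x_{t+1})\le f(x_t)-\left(1-\frac{\eta}{2}\right)\gamma_t\nabla f(x_t)^\top d_t$; (iii) if $t\in\mathcal G\cap\mathcal I_\eta$, then $f(x_{t+1})\le f(x_t)-\left(1-\frac{\eta}{2}\right)\min\left\{1,\frac{\nabla f(x_t)^\top d_t}{L_t\|d_t\|_2^2}\right\}\nabla f(x_t)^\top d_t$; (iv) if in addition $f$ is convex and $\mathcal X=\mathrm{conv}(\mathcal A)$, then $\nabla f(x_t)^\top(x_t-v_t)\ge f(x_t)-f(x^\star)$.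
   Context: $D_{\mathcal A}:=\sup_{x,y\in\mathcal A}\|x-y\|_2$. $f:\mathbb R^n\to\mathbb R$ satisfies $\|\nabla f(x)-\nabla f(y)\|_2\le L\|x-y\|_2$ for all $x,y$. $x^\star$ denotes an optimal solution of $\min_{x\in\mathcal X}f(x)$. For $x\neq y$ let $\ell(x,y):=2|f(y)-f(x)-\nabla f(x)^\top(y-x)|/\|y-x\|_2^2$, and $\ell(x,x):=0$. AC-FW algorithm: given a damping sequence $\{r_t\}_{t\ge0}$ and a direction-finding subroutine, pick $x_{-1}\in\mathcal A$, $x_0\in\arg\min_{v\in\mathcal A}\nabla f(x_{-1})^\top v$, $L_0:=\ell(x_{-1},x_0)$. For $t=0,1,2,\dots$: choose $v_t\in\arg\min_{v\in\mathcal A}\nabla f(x_t)^\top v$; the subroutine returns $d_t\in\mathbb R^n$ and $\gamma_t^{\max}\in(0,\infty]$; set $\gamma_t:=\min\{\nabla f(x_t)^\top d_t/(L_t\|d_t\|_2^2),\gamma_t^{\max}\}$, $\bar x_{t+1}:=x_t-\gamma_t d_t$, $L_{t+1}:=\max\{\ell(x_t,\bar x_{t+1}),r_tL_t\}$, and $x_{t+1}:=\bar x_{t+1}$ if $f(\bar x_{t+1})<f(x_t)$, else $x_{t+1}:=x_t$. For $\eta>1$: $\mathcal I_\eta:=\{t\ge0:L_{t+1}\le\eta L_t\}$; $\mathcal G:=\{t\ge0:\gamma_t^{\max}\ge1\text{ or }\gamma_t<\gamma_t^{\max}\}$. Condition (D): $r_t\in(0,1]$ for all $t$ and $\prod_{t\ge0}r_t\in(0,1]$.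 Condition (S): for every $t\ge0$: (i) $\|d_t\|_2\le D_{\mathcal A}$ and $x_t-\gamma d_t\in\mathcal X$ for every (finite) $\gamma\in[0,\gamma_t^{\max}]$; (ii) $\mathcal G$ is infinite; (iii) if $f$ is convex, there is a constant $R\ge1$ independent of $t$ with $\nabla f(x_t)^\top d_t\ge (f(x_t)-f(x^\star))/R$. *)

(* Defs.v *)
From HB Require Import structures.
From mathcomp Require Import all_boot all_order all_algebra.
From mathcomp Require Import all_classical all_reals all_analysis.
Set Implicit Arguments. Unset Strict Implicit. Unset Printing Implicit Defensive.
Import Order.TTheory GRing.Theory Num.Theory.
Import numFieldNormedType.Exports.
Local Open Scope classical_set_scope.
Local Open Scope ring_scope.

Section Defs.
Variables (R : realType) (n : nat).
Notation vec := 'rV[R]_n.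

Definition dot (u v : vec) : R := \sum_(i < n) u ord0 i * v ord0 i.
Definition norm2 (v : vec) : R := Num.sqrt (dot v v).

Definition diam2 (A : set vec) : R :=
  sup [set r | exists x y, A x /\ A y /\ r = norm2 (x - y)].

Definition convhull (A : set vec) : set vec :=
  [set x | exists (k : nat) (w : 'I_k -> R) (a : 'I_k -> vec),
     (forall i, 0 <= w i) /\ \sum_(i < k) w i = 1 /\ (forall i, A (a i)) /\
     x = \sum_(i < k) w i *: a i].

Definition linspan (A : set vec) : set vec :=
  [set x | exists (k : nat) (w : 'I_k -> R) (a : 'I_k -> vec),
     (forall i, A (a i)) /\ x = \sum_(i < k) w i *: a i].

Definition convex_fun (f : vec -> R) : Prop :=
  forall (x y : vec) (lam : R), 0 <= lam <= 1 ->
    f (lam *: x + (1 - lam) *: y) <= lam * f x + (1 - lam) * f y.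

Definition ell (f : vec -> R) (grad : vec -> vec) (x y : vec) : R :=
  if x == y then 0
  else 2 * `|f y - f x - dot (grad x) (y - x)| / (norm2 (y - x)) ^+ 2.

Definition step (g Lt : R) (d : vec) (gmax : \bar R) : R :=
  match gmax with
  | EFin m => Num.min (g / (Lt * norm2 d ^+ 2)) m
  | _ => g / (Lt * norm2 d ^+ 2)
  end.

End Defs.

(* Main.v *)
Require Import Defs.
From HB Require Import structures.
From mathcomp Require Import all_boot all_order all_algebra.
From mathcomp Require Import all_classical all_reals all_analysis.
Import Order.TTheory GRing.Theory Num.Theory.
Import numFieldNormedType.Exports.
From mathcomp Require Import ring lra.
Local Open Scope classical_set_scope.
Local Open Scope ring_scope.

Section H.
Variables (R : realType) (n : nat).
Implicit Types (u w a b : 'rV[R]_n).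

Lemma dotDr u a b : dot u (a + b) = dot u a + dot u b.
Proof. by rewrite /dot -big_split; apply: eq_bigr => i _; rewrite mxE mulrDr. Qed.

Lemma dotZr u (c : R) a : dot u (c *: a) = c * dot u a.
Proof. by rewrite /dot mulr_sumr; apply: eq_bigr => i _; rewrite mxE mulrCA. Qed.

Lemma dotNr u a : dot u (- a) = - dot u a.
Proof. by rewrite -scaleN1r dotZr mulN1r. Qed.

Lemma dotBr u a b : dot u (a - b) = dot u a - dot u b.
Proof. by rewrite dotDr dotNr. Qed.

Lemma dotZl u (c : R) a : dot (c *: a) u = c * dot a u.
Proof. by rewrite /dot mulr_sumr; apply: eq_bigr => i _; rewrite mxE mulrA. Qed.

Lemma dot_ge0 a : 0 <= dot a a.
Proof. by apply: sumr_ge0 => i _; rewrite -expr2 sqr_ge0. Qed.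

Lemma dot_eq0 a : dot a a = 0 -> a = 0.
Proof.
move=> H; apply/matrixP => i j; rewrite (ord1 i) mxE.
have := @psumr_eq0P R _ predT (fun k => a ord0 k * a ord0 k).
move=> /(_ (fun k _ => (eq_ind _ (fun z => 0 <= z) (sqr_ge0 _) _ (expr2 _)))) /(_ H j isT) /eqP.
by rewrite mulf_eq0 orbb => /eqP.
Qed.

Lemma norm2_sq a : norm2 a ^+ 2 = dot a a.
Proof. by rewrite /norm2 sqr_sqrtr // dot_ge0. Qed.

Lemma dot_sum u k (w : 'I_k -> R) (A : 'I_k -> 'rV[R]_n) :
  dot u (\sum_(i < k) w i *: A i) = \sum_(i < k) w i * dot u (A i).
Proof.
elim: k w A => [|k IH] w A; first by rewrite !big_ord0 /dot big1 // => i _; rewrite mxE mulr0.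
by rewrite !big_ord_recr /= dotDr dotZr IH.
Qed.

Lemma convex_first_order (f : 'rV[R]_n -> R) (grad : 'rV[R]_n -> 'rV[R]_n) :
  (forall y, differentiable f y /\ forall u, 'd f y u = dot (grad y) u) ->
  convex_fun f -> forall x y, f x + dot (grad x) (y - x) <= f y.
Proof.
move=> Hd Hc x y.
have [dfx dfe] := Hd x.
set v := y - x.
have Hder : derivable f x v by apply: diff_derivable.
have E : 'D_v f x = dot (grad x) v by rewrite deriveE // dfe.
set q := (fun h : R => h^-1 *: ((f \o shift x) (h *: v) - f x)).
have Hr : q @ 0^'+ --> 'D_v f x.
  move=> B /Hder /nbhs_ballP [e e0 xe_B].
  by exists e => //= z ze /gt_eqF/negbT/xe_B; exact.
have Hle : \forall h \near 0^'+, q h <= f y - f x.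
  near=> h.
  have h0 : 0 < h by near: h; exact: nbhs_right_gt.
  have h1 : h <= 1 by near: h; apply: nbhs_right_le; exact: ltr01.
  have := Hc y x h; rewrite (ltW h0) h1 => /(_ isT).
  have -> : h *: y + (1 - h) *: x = h *: v + x.
    by rewrite /v scalerBr scalerBl scale1r addrA addrAC.
  rewrite /q /= => Hh.
  rewrite -[_ *: _]/(_ * _) mulrC ler_pdivrMr //.
  have -> : (f y - f x) * h = h * f y + (1 - h) * f x - f x by ring.
  by rewrite lerD2r.
have := cvgr_to_le Hr Hle.
rewrite E => H; have := H (at_right_proper_filter 0); lra.
Unshelve. all: by end_near.
Qed.


Lemma dot0r u : dot u 0 = 0.
Proof. by rewrite /dot big1 // => i _; rewrite mxE mulr0. Qed.

Lemma ell_ge0 (f : 'rV[R]_n -> R) grad a b : 0 <= ell f grad a b.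
Proof.
rewrite /ell; case: (a == b) => //.
by apply: divr_ge0; [apply: mulr_ge0 => //; apply: normr_ge0 | apply: sqr_ge0].
Qed.

End H.

Lemma min_cases {R : realType} (a b : R) :
  Num.min a b <= a /\ Num.min a b <= b /\ (Num.min a b = a \/ Num.min a b = b).
Proof.
rewrite minEle; case: ifP => H.
  by split; [|split; [|left]].
by move/negbT: H; rewrite -ltNge => /ltW H; split; [|split; [|right]].
Qed.

Lemma step_core (R : realType) (g P gam : R) (gm : \bar R) :
  0 <= P -> (0 < gm)%E ->
  gam = match gm with EFin m => Num.min (g / P) m | _ => g / P end ->
  [/\ P * gam ^+ 2 <= gam * g,
      0 <= Num.min 1 (g / P) * g &
      ((1%:E <= gm)%E \/ (gam%:E < gm)%E) -> Num.min 1 (g / P) * g <= gam * g].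
Proof.
move=> P0 gm0 Hg.
set q := g / P in Hg *.
have [m1 [m2 m3]] := min_cases (1:R) q.
have [HP|HP] : P = 0 \/ 0 < P by move: P0; rewrite le_eqVlt => /orP [/eqP ->|->]; [left|right].
  have q0 : q = 0 by rewrite /q HP invr0 mulr0.
  have mq0 : Num.min 1 q = 0.
    by case: m3 => Hm; [move: m2; rewrite Hm q0 ler10 | rewrite Hm q0].
  have gam0 : gam = 0.
    move: gm0 Hg; case: gm => [m| |] //= gm0 ->; rewrite q0 //.
    by rewrite lte_fin in gm0; rewrite minEle (ltW gm0).
  by rewrite mq0 gam0 HP; split; rewrite ?mul0r ?mulr0 ?expr0n //=.
have gq : g = q * P by rewrite /q mulfVK // gt_eqF.
have Hmg : 0 <= Num.min 1 q * g.
  rewrite gq; case: m3 => Hm; rewrite Hm; last by rewrite mulrA -expr2 mulr_ge0 // sqr_ge0.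
  case: (leP 0 q) => q0; first by rewrite mul1r mulr_ge0.
  by move: m2; rewrite Hm; lra.
have Hq : Num.min 1 q * g <= q * g.
  rewrite gq; case: m3 => Hm; last by rewrite Hm.
  rewrite Hm; case: (leP 0 q) => q0; last by move: m2; lra.
  move: m2; rewrite Hm => m2.
  have : 0 <= (q - 1) * (q * P) by apply: mulr_ge0; [lra | apply: mulr_ge0 => //; apply: ltW].
  lra.
move: gm0 Hg; case: gm => [m| |] //= gm0 Hg.
- rewrite lte_fin in gm0.
  have [n1 [n2 n3]] := min_cases q m.
  case: n3 => Hn; rewrite Hn in Hg; subst gam.
    split; [by rewrite gq le_eqVlt; apply/orP; left; apply/eqP; ring|exact: Hmg|by move=> _].
  case: (leP m q) => mq; last by move: n1; rewrite Hn; lra.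
  split; [|exact: Hmg|].
    rewrite gq; have: 0 <= m * (q - m) * P by rewrite mulr_ge0 // mulr_ge0 // ?subr_ge0 // ltW.
    nra.
  rewrite !lee_fin !lte_fin ltxx => -[H1|//].
  have q1 : Num.min 1 q = 1 by case: m3 => // Hm; move: m1; rewrite Hm; lra.
  rewrite q1 mul1r gq; have : 0 <= q * P * (m - 1) by rewrite mulr_ge0 // ?subr_ge0 // mulr_ge0 //; lra.
  nra.
- subst gam; split; [by rewrite gq le_eqVlt; apply/orP; left; apply/eqP; ring|exact: Hmg|by move=> _].
Qed.

Theorem lemma4 (R : realType) (n : nat)
  (A X : set 'rV[R]_n) (f : 'rV[R]_n -> R) (grad : 'rV[R]_n -> 'rV[R]_n)
  (L : R) (xstar : 'rV[R]_n)
  (r : nat -> R)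
  (xm1 : 'rV[R]_n) (x v d xbar : nat -> 'rV[R]_n)
  (gmax : nat -> \bar R) (gamma Lt : nat -> R) (eta : R) :
  (* setting *)
  compact A ->
  (X = convhull A \/ X = linspan A) ->
  (forall y, differentiable f y /\ forall u, 'd f y u = dot (grad y) u) ->
  (forall y z, norm2 (grad y - grad z) <= L * norm2 (y - z)) ->
  (* x^* is an optimal solution of min_{x in X} f(x) *)
  X xstar -> (forall y, X y -> f xstar <= f y) ->
  (* AC-FW algorithm *)
  A xm1 ->
  A (x 0%N) -> (forall u, A u -> dot (grad xm1) (x 0%N) <= dot (grad xm1) u) ->
  Lt 0%N = ell f grad xm1 (x 0%N) ->
  (forall t, A (v t) /\ forall u, A u -> dot (grad (x t)) (v t) <= dot (grad (x t)) u) ->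
  (forall t, (0 < gmax t)%E) ->
  (forall t, gamma t = step (dot (grad (x t)) (d t)) (Lt t) (d t) (gmax t)) ->
  (forall t, xbar t.+1 = x t - gamma t *: d t) ->
  (forall t, Lt t.+1 = Num.max (ell f grad (x t) (xbar t.+1)) (r t * Lt t)) ->
  (forall t, x t.+1 = if f (xbar t.+1) < f (x t) then xbar t.+1 else x t) ->
  (* Condition (D) *)
  (forall t, 0 < r t <= 1) ->
  (exists p : R, 0 < p <= 1 /\
     (fun N : nat => \prod_(i < N) r i) @ \oo --> p) ->
  (* Condition (S) *)
  (forall t, norm2 (d t) <= diam2 A /\
     forall g : R, 0 <= g -> (g%:E <= gmax t)%E -> X (x t - g *: d t)) ->
  (forall N, exists t, (N <= t)%N /\
     ((1%:E <= gmax t)%E \/ ((gamma t)%:E < gmax t)%E)) ->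
  (convex_fun f -> exists Rc : R, 1 <= Rc /\
     forall t, dot (grad (x t)) (d t) >= (f (x t) - f xstar) / Rc) ->
  1 < eta ->
  forall t : nat,
    (* (i) *)
    (f (x t.+1) <= f (xbar t.+1) /\
     f (xbar t.+1) <= f (x t) - gamma t * dot (grad (x t)) (d t)
                      + Lt t.+1 / 2 * gamma t ^+ 2 * norm2 (d t) ^+ 2) /\
    (* (ii) *)
    (Lt t.+1 <= eta * Lt t ->
     f (x t.+1) <= f (x t) - (1 - eta / 2) * gamma t * dot (grad (x t)) (d t)) /\
    (* (iii) *)
    (((1%:E <= gmax t)%E \/ ((gamma t)%:E < gmax t)%E) -> Lt t.+1 <= eta * Lt t ->
     f (x t.+1) <= f (x t) - (1 - eta / 2)
        * Num.min 1 (dot (grad (x t)) (d t) / (Lt t * norm2 (d t) ^+ 2))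
        * dot (grad (x t)) (d t)) /\
    (* (iv) *)
    (convex_fun f -> X = convhull A ->
     dot (grad (x t)) (x t - v t) >= f (x t) - f xstar).

Proof.
move=> cA HX Hdiff HLip HXs Hopt HAxm1 HAx0 Hx0 HLt0 Hv Hgm Hgam Hxbar HLtS Hx Hr Hprod HS HG HRc Heta t.
have Lge0 : forall s, 0 <= Lt s.
  case=> [|s]; first by rewrite HLt0 ell_ge0.
  by rewrite HLtS le_max ell_ge0.
set g := dot (grad (x t)) (d t).
set gam := gamma t.
set N2 := norm2 (d t) ^+ 2.
have N2ge0 : 0 <= N2 by rewrite /N2 sqr_ge0.
have [K1 K3 K2] := @step_core R g (Lt t * N2) gam (gmax t) (mulr_ge0 (Lge0 t) N2ge0) (Hgm t) (Hgam t).
have Hx1 : f (x t.+1) <= f (xbar t.+1) /\ f (x t.+1) <= f (x t).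
  rewrite Hx; case: ifP => H; [split; [exact: lexx|exact: ltW] | split; [by rewrite leNgt H|exact: lexx]].
have Hell : ell f grad (x t) (xbar t.+1) <= Lt t.+1 by rewrite HLtS le_max lexx.
have Hi : f (xbar t.+1) <= f (x t) - gam * g + Lt t.+1 / 2 * gam ^+ 2 * N2.
  have Hw : xbar t.+1 - x t = (- gam) *: d t by rewrite Hxbar addrAC subrr add0r scaleNr.
  have Hdw : dot (grad (x t)) (xbar t.+1 - x t) = - (gam * g) by rewrite Hw dotZr mulNr.
  have Hww : dot (xbar t.+1 - x t) (xbar t.+1 - x t) = gam ^+ 2 * N2.
    by rewrite Hw dotZr dotZl /N2 norm2_sq; ring.
  have LN : 0 <= Lt t.+1 / 2 * gam ^+ 2 * N2.
    by rewrite mulr_ge0 // mulr_ge0 // ?sqr_ge0 // divr_ge0.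
  case: (eqVneq (x t) (xbar t.+1)) => Heq.
    have W0 : gam ^+ 2 * N2 = 0.
      by rewrite -Hww -Heq subrr dot0r.
    have G0 : gam * g = 0.
      by move: Hdw; rewrite -Heq subrr dot0r => /eqP; rewrite eq_sym oppr_eq0 => /eqP.
    rewrite -Heq G0; lra.
  move: Hell; rewrite /ell (negbTE Heq) norm2_sq Hdw Hww => Hell.
  have Wpos : 0 < gam ^+ 2 * N2.
    rewrite lt_def -Hww dot_ge0 andbT; apply/eqP => /dot_eq0 /eqP.
    by rewrite subr_eq0 eq_sym (negbTE Heq).
  set E := f (xbar t.+1) - f (x t) - - (gam * g) in Hell.
  have HE : 2 * `|E| = 2 * `|E| / (gam ^+ 2 * N2) * (gam ^+ 2 * N2) by rewrite mulfVK // gt_eqF.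
  have HEa : E <= `|E| by apply: ler_norm.
  have : 2 * `|E| / (gam ^+ 2 * N2) * (gam ^+ 2 * N2) <= Lt t.+1 * (gam ^+ 2 * N2).
    by rewrite ler_wpM2r // ltW.
  rewrite -HE; move: HEa; rewrite /E; lra.
have Hii : Lt t.+1 <= eta * Lt t ->
     f (x t.+1) <= f (x t) - (1 - eta / 2) * gam * g.
  move=> HL.
  have : Lt t.+1 * (gam ^+ 2 * N2) <= eta * Lt t * (gam ^+ 2 * N2).
    by rewrite ler_wpM2r // mulr_ge0 // sqr_ge0.
  have : eta / 2 * (Lt t * N2 * gam ^+ 2) <= eta / 2 * (gam * g).
    by rewrite ler_wpM2l // divr_ge0 // ltW // (lt_trans ltr01).
  case: Hx1 => Hx1a _.
  lra.
split; first by split; [case: Hx1|exact: Hi].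
split; first exact: Hii.
split.
  move=> HGt HL; have := Hii HL; have := K2 HGt; case: Hx1 => _ Hx1b.
  set mg := Num.min 1 (g / (Lt t * N2)) * g in K2 K3 *.
  rewrite -/mg -mulrA => HK2 HHii.
  case: (leP eta 2) => He.
    have : (1 - eta / 2) * mg <= (1 - eta / 2) * (gam * g).
      by rewrite ler_wpM2l // subr_ge0 ler_pdivrMr // mul1r.
    rewrite !mulrA; lra.
  have : (1 - eta / 2) * mg <= 0 by rewrite mulr_le0_ge0 //; lra.
  rewrite -mulrA -/mg; lra.
move=> Hconv HXc.
have Hfo := @convex_first_order R n f grad Hdiff Hconv (x t) xstar.
move: HXs Hfo; rewrite HXc => -[k [w [a [w0 [w1 [aA Hxs]]]]]]; rewrite Hxs => Hfo.
have [_ Hvmin] := Hv t.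
have : dot (grad (x t)) (v t) <= dot (grad (x t)) (\sum_(i < k) w i *: a i).
  rewrite dot_sum -[X in X <= _]mul1r -w1 mulr_suml.
  by apply: ler_sum => i _; apply: ler_wpM2l => //; apply: Hvmin.
move: Hfo; rewrite !dotBr.
lra.
Qed.
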